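(* Let $g,d:\mathbb{N}\to\mathbb{N}$ be two functions such that $g\in n+o(n)$ and $d\in o(n)$. Define $f:\mathbb{N}\to\mathbb{N}$ by $f(n)=\max_{n=n_1+\dots+n_{d(n)}}\sum_{i=1}^{d(n)}g(n_i)$, where the maximum ranges over all ways of writing $n$ as a sum of $d(n)$ natural numbers $n_1,\dots,n_{d(n)}$. Then $f\in n+o(n)$. *)

(* Defs.v *)
From mathcomp Require Import all_boot all_order all_algebra.
Set Implicit Arguments. Unset Strict Implicit. Unset Printing Implicit Defensive.
Import Order.TTheory GRing.Theory Num.Theory.

Local Open Scope ring_scope.

Definition little_o_n (h : nat -> nat) : Prop :=
  forall eps : rat, 0 < eps ->
    exists N : nat, forall n : nat, (N <= n)%N ->
      (h n)%:R <= eps * n%:R.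

Definition n_plus_little_o_n (h : nat -> nat) : Prop :=
  forall eps : rat, 0 < eps ->
    exists N : nat, forall n : nat, (N <= n)%N ->
      `|(h n)%:R - n%:R| <= eps * n%:R.

(* Each part n_i is <= n, so parts are encoded
   as elements of 'I_n.+1.  (The max over an empty range would be 0; this
   never happens when d n >= 1.) *)
Definition fmax (g d : nat -> nat) (n : nat) : nat :=
  \max_(t : {ffun 'I_(d n) -> 'I_n.+1} | (\sum_(i < d n) (t i : nat) == n)%N)
     \sum_(i < d n) g (t i).

(* Main.v *)
Require Import Defs.
From mathcomp Require Import all_boot all_order all_algebra.
From mathcomp Require Import lra.
Import Order.TTheory GRing.Theory Num.Theory.

Lemma lower_aux (g : nat -> nat) (k n : nat) : (0 < k)%N ->
  (g n <= \max_(t : {ffun 'I_k -> 'I_n.+1} | (\sum_(i < k) (t i : nat) == n)%N)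
     \sum_(i < k) g (t i))%N.
Proof.
case: k => // k _.
pose t := [ffun i : 'I_k.+1 => if (i : nat) == 0%N then (ord_max : 'I_n.+1) else ord0].
have Ht : forall i : 'I_k, t (lift ord0 i) = ord0.
  by move=> i; rewrite ffunE.
have Ht0 : t ord0 = ord_max by rewrite ffunE.
apply: (leq_trans _ (@leq_bigmax_cond _ _ _ t _)).
  rewrite big_ord_recl Ht0 /=; exact: leq_addr.
rewrite big_ord_recl Ht0 /= big1 ?addn0 // => i _; by rewrite Ht.
Qed.

Local Open Scope ring_scope.

Lemma upper_aux (g : nat -> nat) (k n : nat) (a c : rat) :
  0 <= a -> 0 <= c ->
  (forall m, (g m)%:R <= a * m%:R + c) ->
  ((\max_(t : {ffun 'I_k -> 'I_n.+1} | (\sum_(i < k) (t i : nat) == n)%N)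
     \sum_(i < k) g (t i))%:R <= a * n%:R + c * k%:R :> rat).
Proof.
move=> a0 c0 H.
apply: (big_ind (fun x : nat => (x%:R : rat) <= a * n%:R + c * k%:R)).
- by rewrite /= addr_ge0 // mulr_ge0.
- by move=> x y Hx Hy; rewrite /maxn; case: ltnP.
move=> t /eqP Hs.
rewrite natr_sum.
apply: (le_trans (ler_sum _ (fun i _ => H (t i)))).
rewrite big_split /= -mulr_sumr -natr_sum Hs sumr_const card_ord.
by rewrite [c * _]mulr_natr.
Qed.

Theorem lemma5p5 (g d : nat -> nat) :
  (forall n : nat, (0 < n)%N -> (0 < d n)%N) ->
  n_plus_little_o_n g ->
  little_o_n d ->
  n_plus_little_o_n (fmax g d).
Proof.
move=> Hd Hg Hdo eps eps0.
have e0 : 0 < eps / 2 by rewrite divr_gt0.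
have [N1 HN1] := Hg _ e0.
pose C := (\max_(j < N1) g j)%N.
have HC : forall m, (g m)%:R <= (1 + eps / 2) * m%:R + C%:R :> rat.
  move=> m; case: (ltnP m N1) => Hm.
    have : (g m <= C)%N by exact: (leq_bigmax_cond (F := fun j : 'I_N1 => g j) (Ordinal Hm)).
    rewrite -(ler_nat rat) => H1.
    have : (0 : rat) <= m%:R by [].
    move=> *; nra.
  have := HN1 m Hm; rewrite ler_norml => /andP [_ H2].
  have : (0 : rat) <= C%:R by [].
  move=> *; lra.
have e1 : 0 < (eps / 2) / (C%:R + 1) by rewrite divr_gt0 // ltr_wpDl.
have [N2 HN2] := Hdo _ e1.
exists (maxn 1 (maxn N1 N2)) => n.
rewrite !geq_max => /and3P [n1 nN1 nN2].
have Hf1 := @lower_aux g (d n) n (Hd n n1).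
have Hgn := HN1 n nN1.
have Hdn := HN2 n nN2.
have Hup := @upper_aux g (d n) n (1 + eps/2) C%:R ltac:(lra) ltac:(by []) HC.
rewrite -(ler_nat rat) in Hf1.
rewrite ler_norml in Hgn *; case/andP: Hgn => Hg1 Hg2.
rewrite /fmax.
set F := (\max_(_ | _) _)%N in Hf1 Hup *.
have HCe : (C%:R + 1) * ((eps / 2) / (C%:R + 1)) = eps / 2 :> rat.
  rewrite mulrC divfK //; apply: lt0r_neq0; exact: ltr_wpDl.
have : (0 : rat) <= C%:R by [].
have : (0 : rat) <= n%:R by [].
have : (0 : rat) <= (d n)%:R by [].
move: Hdn HCe; set e' := (eps / 2 / (C%:R + 1)).
move=> *. rewrite ler_norml; apply/andP; split; nra.
Qed.
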